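(* Let $\mathcal S$ and $\mathcal T$ be additive categories and let $T:\mathcal S\to\mathcal T$ be an additive functor admitting a left adjoint $S_\ell$. Then a morphism $g\in\mathcal S(A,B)$ is $\mathrm{add}(\mathrm{im}(S_\ell))$-epic if and only if $T(g)$ is a split epimorphism.
   Context: $\mathrm{add}(\mathrm{im}(S_\ell))$ is the full subcategory of $\mathcal S$ of direct summands of finite direct sums of objects of the form $S_\ell(C)$, $C$ in $\mathcal T$. For a full subcategory $\mathcal X$ of $\mathcal S$, a morphism $g\in\mathcal S(A,B)$ is $\mathcal X$-epic if for every object $X$ of $\mathcal X$ the map $\mathcal S(X,g):\mathcal S(X,A)\to\mathcal S(X,B)$ is surjective. *)

(* Defs.v *)
From mathcomp Require Import all_boot all_algebra.
Set Implicit Arguments. Unset Strict Implicit. Unset Printing Implicit Defensive.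
Import GRing.Theory.
Local Open Scope ring_scope.

Record AddCat := {
  Ob : Type;
  Mor : Ob -> Ob -> zmodType;
  idm : forall A, Mor A A;
  comp : forall A B C, Mor B C -> Mor A B -> Mor A C;
  comp_idl : forall A B (f : Mor A B), comp (idm B) f = f;
  comp_idr : forall A B (f : Mor A B), comp f (idm A) = f;
  compA : forall A B C D (f : Mor C D) (g : Mor B C) (h : Mor A B),
      comp f (comp g h) = comp (comp f g) h;
  comp_addl : forall A B C (f f' : Mor B C) (g : Mor A B),
      comp (f + f') g = comp f g + comp f' g;
  comp_addr : forall A B C (f : Mor B C) (g g' : Mor A B),
      comp f (g + g') = comp f g + comp f g';
  has_zero_object : exists Z : Ob, idm Z = 0;
  has_biproducts : forall A B : Ob, exists (P : Ob) (i1 : Mor A P) (i2 : Mor B P)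
      (p1 : Mor P A) (p2 : Mor P B),
      [/\ comp p1 i1 = idm A, comp p2 i2 = idm B, comp p1 i2 = 0, comp p2 i1 = 0
        & comp i1 p1 + comp i2 p2 = idm P]
}.

Arguments idm {_} _.
Arguments comp {_ _ _ _} _ _.

Record AddFunctor (C D : AddCat) := {
  F_ob : Ob C -> Ob D;
  F_hom : forall A B, Mor A B -> Mor (F_ob A) (F_ob B);
  F_id : forall A, F_hom (idm A) = idm (F_ob A);
  F_comp : forall A B E (f : Mor B E) (g : Mor A B),
      F_hom (comp f g) = comp (F_hom f) (F_hom g);
  F_add : forall A B (f g : Mor A B), F_hom (f + g) = F_hom f + F_hom g
}.

Arguments F_ob {_ _} _ _.
Arguments F_hom {_ _} _ {_ _} _.

(* Plain functors (a left adjoint of an additive functor between additive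
   categories is automatically additive; we do not assume it). *)
Record Functor (C D : AddCat) := {
  G_ob : Ob C -> Ob D;
  G_hom : forall A B, Mor A B -> Mor (G_ob A) (G_ob B);
  G_id : forall A, G_hom (idm A) = idm (G_ob A);
  G_comp : forall A B E (f : Mor B E) (g : Mor A B),
      G_hom (comp f g) = comp (G_hom f) (G_hom g)
}.

Arguments G_ob {_ _} _ _.
Arguments G_hom {_ _} _ {_ _} _.

Definition is_left_adjoint (S T : AddCat) (L : Functor T S) (R : AddFunctor S T) :=
  exists phi : forall (C : Ob T) (A : Ob S), Mor (G_ob L C) A -> Mor C (F_ob R A),
    [/\ forall C A, bijective (@phi C A),
        forall C C' A (f : Mor (G_ob L C) A) (u : Mor C' C),
          phi C' A (comp f (G_hom L u)) = comp (phi C A f) u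
      & forall C A A' (f : Mor (G_ob L C) A) (a : Mor A A'),
          phi C A' (comp a f) = comp (F_hom R a) (phi C A f)].

Definition is_finite_direct_sum (S : AddCat) (n : nat) (X : 'I_n -> Ob S) (Y : Ob S) :=
  exists (iota : forall i, Mor (X i) Y) (pi : forall i, Mor Y (X i)),
    (forall i, comp (pi i) (iota i) = idm (X i)) /\
    (forall i j, i != j -> comp (pi j) (iota i) = 0) /\
    \sum_(i < n) comp (iota i) (pi i) = idm Y.

Definition is_direct_summand (S : AddCat) (X Y : Ob S) :=
  exists (X' : Ob S) (i1 : Mor X Y) (i2 : Mor X' Y) (p1 : Mor Y X) (p2 : Mor Y X'),
    [/\ comp p1 i1 = idm X, comp p2 i2 = idm X', comp p1 i2 = 0, comp p2 i1 = 0
      & comp i1 p1 + comp i2 p2 = idm Y].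

Definition in_add_im (S T : AddCat) (L : Functor T S) (X : Ob S) :=
  exists (n : nat) (C : 'I_n -> Ob T) (Y : Ob S),
    is_finite_direct_sum (fun i => G_ob L (C i)) Y /\ is_direct_summand X Y.

Definition is_epic_wrt (S : AddCat) (P : Ob S -> Prop) (A B : Ob S) (g : Mor A B) :=
  forall X, P X -> forall h : Mor X B, exists k : Mor X A, comp g k = h.

Definition is_split_epi (T : AddCat) (A B : Ob T) (g : Mor A B) :=
  exists s : Mor B A, comp g s = idm B.

(* Main.v *)
From Pilot Require Import Defs.
From mathcomp Require Import all_boot all_algebra.
Import Pilot.Defs.
Import GRing.Theory.
Local Open Scope ring_scope.

Section Aux.
Variable S : AddCat.

Lemma comp0l (A B C : Ob S) (g : Mor A B) : comp (0 : Mor B C) g = 0.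
Proof.
have H := comp_addl (0 : Mor B C) 0 g; rewrite addr0 in H.
by apply/eqP; rewrite -(subrr (comp (0 : Mor B C) g)) {2}H addrK.
Qed.

Lemma comp0r (A B C : Ob S) (f : Mor B C) : comp f (0 : Mor A B) = 0.
Proof.
have H := comp_addr f (0 : Mor A B) 0; rewrite addr0 in H.
by apply/eqP; rewrite -(subrr (comp f (0 : Mor A B))) {2}H addrK.
Qed.

Lemma comp_suml (A B C : Ob S) n (f : 'I_n -> Mor B C) (g : Mor A B) :
  comp (\sum_(i < n) f i) g = \sum_(i < n) comp (f i) g.
Proof.
apply: (big_morph (fun x => comp x g)); last exact: comp0l.
by move=> x y; rewrite comp_addl.
Qed.

Lemma comp_sumr (A B C : Ob S) n (f : Mor B C) (g : 'I_n -> Mor A B) :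
  comp f (\sum_(i < n) g i) = \sum_(i < n) comp f (g i).
Proof.
apply: (big_morph (fun x => comp f x)); last exact: comp0r.
by move=> x y; rewrite comp_addr.
Qed.
End Aux.

Theorem lemma2p2 (S T : AddCat) (TF : AddFunctor S T) (L : Functor T S)
    (adj : is_left_adjoint L TF) (A B : Ob S) (g : Mor A B) :
  is_epic_wrt (in_add_im L) g <-> is_split_epi (F_hom TF g).
Proof.
case: adj => phi [bij natC natA].
split.
- move=> ep.
  case: (bij (F_ob TF B) B) => psi K1 K2.
  have inX : in_add_im L (G_ob L (F_ob TF B)).
    exists 1%N, (fun _ => F_ob TF B), (G_ob L (F_ob TF B)); split.
      exists (fun _ => idm _), (fun _ => idm _); split; first by move=> i; rewrite comp_idl.
      split; first by move=> i j; rewrite !ord1 eqxx.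
      by rewrite big_ord1 comp_idl.
    case: (has_zero_object S) => Z HZ.
    exists Z, (idm _), 0, (idm _), 0; split.
    - by rewrite comp_idl.
    - by rewrite comp0l HZ.
    - by rewrite comp0r.
    - by rewrite comp0l.
    - by rewrite comp_idl comp0l addr0.
  case: (ep _ inX (psi (idm _))) => k Hk.
  exists (phi _ _ k).
  by rewrite -natA Hk K2.
- case=> s Hs X [n [C [Y [[io [pi [Hpi [_ Hsum]]]] [X' [i1 [i2 [p1 [p2 [H1 _ _ _ _]]]]]]]]]] h.
  case: (bij (F_ob TF A) A) => psi K1 K2.
  pose eA := psi (idm (F_ob TF A)).
  have key : forall (D : Ob T) (f : Mor (G_ob L D) B),
      comp g (comp eA (G_hom L (comp s (phi _ _ f)))) = f.
    move=> D f; apply: (bij_inj (bij D B)).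
    by rewrite natA natC /eA K2 comp_idl Defs.compA Hs comp_idl.
  exists (comp (\sum_(i < n) comp (comp eA (G_hom L (comp s (phi _ _ (comp h (comp p1 (io i))))))) (pi i)) i1).
  rewrite (Defs.compA g) comp_sumr.
  under eq_bigr => i _ do rewrite Defs.compA key -!Defs.compA.
  by rewrite -comp_sumr -comp_sumr Hsum !comp_idr -Defs.compA H1 comp_idr.
Qed.
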